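(* Let $n\ge2$ and let $g\ge0$ be an integer with $\gcd(n,g)=1$. Then: (i) $\det g\text{-}circ(F_1,\dots,F_n)=\det Q_g\cdot\left[(1-F_{n+1})^{n-1}+F_n^{n-2}\sum_{i=1}^{n-1}F_i\left(\frac{1-F_{n+1}}{F_n}\right)^{i-1}\right]$; (ii) $\det g\text{-}circ(L_1,\dots,L_n)=\det Q_g\cdot\left[(1-L_{n+1})^{n-1}+(L_n-2)^{n-2}\sum_{i=1}^{n-1}(L_{i+2}-3L_{i+1})\left(\frac{1-L_{n+1}}{L_n-2}\right)^{i-1}\right]$; (iii) $\det g\text{-}circ(P_1,\dots,P_n)=\det Q_g\cdot\left[(1-P_{n+1})^{n-1}+P_n^{n-2}\sum_{i=1}^{n-1}P_i\left(\frac{1-P_{n+1}}{P_n}\right)^{i-1}\right]$; (iv) $\det g\text{-}circ(J_1,\dots,J_n)=\det Q_g\cdot\left[(1-J_{n+1})^{n-1}+2^{n-1}J_n^{n-2}\sum_{i=1}^{n-1}J_i\left(\frac{1-J_{n+1}}{2J_n}\right)^{i-1}\right]$.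
   Context: Fibonacci: $F_0=0,F_1=1,F_{m+2}=F_{m+1}+F_m$. Lucas: $L_0=2,L_1=1,L_{m+2}=L_{m+1}+L_m$. Pell: $P_0=0,P_1=1,P_{m+2}=2P_{m+1}+P_m$. Jacobsthal: $J_0=0,J_1=1,J_{m+2}=J_{m+1}+2J_m$. For $n\ge1$, an integer $g\ge 0$ and numbers $a_0,\dots,a_{n-1}$, the $g$-circulant matrix $g\text{-}circ(a_0,\dots,a_{n-1})$ is the $n\times n$ matrix whose $(i,j)$ entry ($0\le i,j\le n-1$) is $a_{(j-ig)\bmod n}$. $Q_g:=g\text{-}circ(1,0,\dots,0)$, i.e. the $n\times n$ matrix whose $(i,j)$ entry is $1$ if $j\equiv ig \pmod n$ and $0$ otherwise. *)

(* Defs.v *)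
From HB Require Import structures.
From mathcomp Require Import all_boot all_order all_algebra.
Set Implicit Arguments. Unset Strict Implicit. Unset Printing Implicit Defensive.
Import Order.TTheory GRing.Theory Num.Theory.

Fixpoint linpair (a0 a1 c1 c2 : nat) (m : nat) : nat * nat :=
  match m with
  | 0 => (a0, a1)
  | m'.+1 => let p := linpair a0 a1 c1 c2 m' in (p.2, c1 * p.2 + c2 * p.1)
  end.
Definition linrec a0 a1 c1 c2 m := (linpair a0 a1 c1 c2 m).1.

Definition Fib (m : nat) : nat := linrec 0 1 1 1 m.
Definition Luc (m : nat) : nat := linrec 2 1 1 1 m.
Definition Pell (m : nat) : nat := linrec 0 1 2 1 m.
Definition Jac (m : nat) : nat := linrec 0 1 1 2 m.

(* g-circ(a_0,...,a_{n-1}) : (i,j) entry is a_{(j - i g) mod n}.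
   (j - i g) mod n is computed in nat as (j + (n - (i g mod n))) mod n. *)
Definition gcirc (R : Type) (n g : nat) (a : nat -> R) : 'M[R]_n :=
  \matrix_(i < n, j < n) a ((j + (n - (i * g) %% n)) %% n).

Definition Qg (R : pzRingType) (n g : nat) : 'M[R]_n :=
  gcirc n g (fun k => if k == 0%N then 1%R else 0%R : R).

(* Main.v *)
Require Import Defs.
From HB Require Import structures.
From mathcomp Require Import all_boot all_order all_algebra.
From mathcomp Require Import zify ring.
Import Order.TTheory GRing.Theory Num.Theory.
Local Open Scope ring_scope.

Lemma modsub (n i k : nat) : (i < n)%N -> (k < n)%N ->
  ((k + (n - i)) %% n = if (i <= k)%N then k - i else k + n - i)%N.
Proof.
move=> hi hk; case: ifP => hik.
  have -> : (k + (n - i) = (k - i) + n)%N by lia.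
  by rewrite modnDr modn_small //; lia.
by rewrite modn_small; lia.
Qed.

Lemma gcirc_mul (R : comNzRingType) (n g : nat) (a : nat -> R) :
  (0 < n)%N -> gcirc n g a = Qg R n g *m gcirc n 1 a.
Proof.
move=> n0; apply/matrixP => i j; rewrite !mxE.
have hr : ((i * g) %% n < n)%N by rewrite ltn_pmod.
rewrite (bigD1 (Ordinal hr)) //= big1 ?addr0.
  rewrite !mxE /= muln1 (modsub _ _ _ hr hr) leqnn subnn eqxx mul1r modn_mod.
  by [].

move=> k hk; rewrite !mxE (modsub _ _ _ hr (ltn_ord k)).
rewrite ifN ?mul0r //; move: hk; rewrite -val_eqE /= => hk.
case: leqP => h; apply/eqP => e; move: hk; lia.
Qed.

Lemma detK (R : comNzRingType) m (v : nat -> R) (x y : R) (K : 'M[R]_m.+1) :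
  (forall r c : 'I_m.+1, K r c = if (c == 0 :> nat) then v r
     else if (r == c :> nat) then x else if (r.+1 == c) then y else 0) ->
  \det K = \sum_(r < m.+1) (-y) ^+ r * v r * x ^+ (m - r).
Proof.
elim: m v K => [|m IH] v K hK.
  by rewrite det_mx11 big_ord1 hK /= !expr0 mul1r mulr1.
rewrite (expand_det_row _ ord0) 2!big_ord_recl big1 ?addr0; last first.
  move=> k _; rewrite hK /=; case: k => [[|k] hk] //=; by rewrite mul0r.
rewrite big_ord_recl /cofactor !hK /= !expr0 !mul1r subn0.
have -> : \det (row' ord0 (col' ord0 K)) = x ^+ m.+1.
  rewrite -det_tr det_trig; last first.
    apply/is_trig_mxP => r c hrc; rewrite !mxE hK /=.
    have h1 : (c.+1 == r.+1) = false by apply/eqP; lia.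
    have h2 : (c.+2 == r.+1) = false by apply/eqP; lia.
    by rewrite /bump /= !add1n h1 h2.
  transitivity (\prod_(i < m.+1) x); last by rewrite prodr_const card_ord.
  by apply: eq_bigr => r _; rewrite !mxE hK /= eqxx.
rewrite (IH (fun r => v r.+1)); last first.
  move=> r c; rewrite !mxE hK /=; case: c => [[|c] hc] //=.
rewrite mulrC; congr (_ + _).
rewrite expr1 big_distrr big_distrr /=; apply: eq_bigr => r _.
rewrite /bump /= add1n subSS exprS; ring.
Qed.

Lemma det_circ (R : comNzRingType) m (a : nat -> R) c1 c2 :
  (forall k, a k.+2 = c1 * a k.+1 + c2 * a k) ->
  \det (gcirc m.+2 1 a) =
  \sum_(i < m.+1) (- (a 1%N - c1 * a 0%N - c2 * a m.+1)) ^+ (m - i) *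
     (a 0%N - c1 * a m.+1 - c2 * a m) ^+ i *
     (a 0%N * a ((i + 2) %% m.+2)%N - a 1%N * a i.+1).
Proof.
move=> rec.
set x := a 0%N - _ - _; set y := a 1%N - _ - _.
pose W : 'M[R]_m.+2 := \matrix_(k, j) (if k == j then 1 else
   if (1 < j)%N && (k.+1 == j) then - c1 else
   if (1 < j)%N && (k.+2 == j) then - c2 else 0).
have dW : \det W = 1.
  rewrite -det_tr det_trig; last first.
    apply/is_trig_mxP => r c hrc; rewrite !mxE.
    have h1 : (c == r) = false by apply/eqP => e; move: hrc; rewrite e ltnn.
    have h2 : (c.+1 == r) = false by apply/eqP; lia.
    have h3 : (c.+2 == r) = false by apply/eqP; lia.
    by rewrite h1 h2 h3 !andbF.
  by rewrite big1 // => i _; rewrite !mxE eqxx.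
pose C := gcirc m.+2 1 a.
have hC : forall i j : 'I_m.+2,
    C i j = a (if (i <= j)%N then j - i else j + m.+2 - i)%N.
  by move=> i j; rewrite mxE muln1 (modn_small (ltn_ord i)) modsub.
have hN : forall i j : 'I_m.+2, (C *m W) i j =
   if (j < 2)%N then C i j else if i == j :> nat then x
   else if i.+1 == j then y else 0.
  move=> i j; rewrite mxE; case: ifP => hj.
    rewrite (bigD1 j) //= big1 ?addr0; last first.
      move=> k hk; rewrite [W k j]mxE (negbTE hk).
      have -> : (1 < j)%N = false by lia.
      by rewrite mulr0.
    by rewrite [W j j]mxE eqxx mulr1.
  have hj1 : (j.-1 < m.+2)%N by have := ltn_ord j; lia.
  have hj2 : (j.-2 < m.+2)%N by have := ltn_ord j; lia.
  rewrite (bigD1 j) //= (bigD1 (Ordinal hj1)) /=; last first.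
    by rewrite -val_eqE /=; apply/eqP; lia.
  rewrite (bigD1 (Ordinal hj2)) /=; last first.
    by rewrite -!val_eqE /=; apply/andP; split; apply/eqP; lia.
  rewrite big1 ?addr0; last first.
    move=> k /andP[/andP[hk1 hk2] hk3]; rewrite [W k j]mxE (negbTE hk1).
    move: hk2 hk3; rewrite -!val_eqE /= => hk2 hk3.
    have -> : (k.+1 == j) = false by apply/eqP; lia.
    have -> : (k.+2 == j) = false by apply/eqP; lia.
    by rewrite !andbF mulr0.
  rewrite ![W _ _]mxE eqxx mulr1.
  rewrite -[Ordinal hj1 == j]val_eqE -[Ordinal hj2 == j]val_eqE /=.
  have -> : (1 < j)%N by lia.
  have -> : (j.-1 == j) = false by apply/eqP; lia.
  have -> : (j.-2 == j) = false by apply/eqP; lia.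
  have -> : (j.-2.+1 == j) = false by apply/eqP; lia.
  have -> : (j.-1.+1 == j) by apply/eqP; lia.
  have -> : (j.-2.+2 == j) by apply/eqP; lia.
  rewrite !hC /=.
  set e0 := (if (i <= j)%N then _ else _).
  set e1 := (if (i <= j.-1)%N then _ else _).
  set e2 := (if (i <= j.-2)%N then _ else _).
  have hi := ltn_ord i; have hjj := ltn_ord j.
  case: (ltngtP i j) => hij.
  - case: (boolP (i.+1 == j)) => hij1.
    + have -> : e0 = 1%N by rewrite /e0; case: ifP; lia.
      have -> : e1 = 0%N by rewrite /e1; case: ifP; lia.
      have -> : e2 = m.+1 by rewrite /e2; case: ifP; lia.
      rewrite /y; ring.
    + have -> : e0 = (j.-2 - i).+2 by rewrite /e0; case: ifP; lia.
      have -> : e1 = (j.-2 - i).+1 by rewrite /e1; case: ifP; lia.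
      have -> : e2 = (j.-2 - i)%N by rewrite /e2; case: ifP; lia.
      rewrite rec; ring.
  - have -> : (i.+1 == j) = false by apply/eqP; lia.
    have -> : e0 = (j.-2 + m.+2 - i).+2 by rewrite /e0; case: ifP; lia.
    have -> : e1 = (j.-2 + m.+2 - i).+1 by rewrite /e1; case: ifP; lia.
    have -> : e2 = (j.-2 + m.+2 - i)%N by rewrite /e2; case: ifP; lia.
    rewrite rec; ring.
  - have -> : e0 = 0%N by rewrite /e0; case: ifP; lia.
    have -> : e1 = m.+1 by rewrite /e1; case: ifP; lia.
    have -> : e2 = m by rewrite /e2; case: ifP; lia.
    rewrite /x; ring.
rewrite -[LHS]mulr1 -dW -det_mulmx.
rewrite (expand_det_row _ ord0) 2!big_ord_recl big1 ?addr0; last first.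
  move=> k _; rewrite hN /=; case: k => [[|[|k]] hk] //=; by rewrite mul0r.
rewrite /cofactor !hN /= !hC /=.
have hrc : forall (B : 'M[R]_m.+2) r c j, row' ord0 (col' j B) r c = B (lift ord0 r) (lift j c).
  by move=> *; rewrite !mxE.
rewrite -/C (@detK _ _ (fun r => a (if (r.+1 <= 1)%N then (1 - r.+1) else (1 + m.+2 - r.+1))%N) x y); last first.
  move=> r c; rewrite hrc hN hC; case: c => [[|c] hc]; rewrite /bump /= ?add1n //.
rewrite (@detK _ _ (fun r => a (m.+1 - r)%N) x y); last first.
  move=> r c; rewrite hrc hN hC; case: c => [[|c] hc]; rewrite /bump /= ?add1n //.
rewrite /bump /= subn0 !expr0 !mul1r expr1.
rewrite [RHS](reindex_inj rev_ord_inj) /= !big_distrr /= -big_split /=.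
apply: eq_bigr => i _.
have hi := ltn_ord i.
have -> : (m.+1 - i.+1 = m - i)%N by lia.
have -> : (m - (m - i) = i)%N by lia.
have -> : ((m - i).+1 = m.+1 - i)%N by lia.
have -> : ((m - i + 2) %% m.+2 = if (i < 1)%N then 1 - i.+1 else 1 + m.+2 - i.+1)%N.
  case: ifP => h.
    have -> : (m - i + 2 = m.+2)%N by lia.
    by rewrite modnn; lia.
  by rewrite modn_small; lia.
ring.
Qed.

Lemma circ_final (F : fieldType) m (a b : nat -> F) c1 c2 X w κ :
  (forall k, a k.+2 = c1 * a k.+1 + c2 * a k) ->
  a 0%N - c1 * a m.+1 - c2 * a m = X ->
  - (a 1%N - c1 * a 0%N - c2 * a m.+1) = w ->
  w != 0 ->
  (forall i, (i < m)%N -> a 0%N * a (i + 2)%N - a 1%N * a i.+1 = κ * b i.+1) ->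
  a 0%N * a 0%N - a 1%N * a m.+1 = X + κ * b m.+1 ->
  \det (gcirc m.+2 1 a) =
    X ^+ m.+1 + κ * w ^+ m * \sum_(1 <= i < m.+2) b i * (X / w) ^+ i.-1.
Proof.
move=> rec hx hy hw he hl.
rewrite (@det_circ _ _ _ _ _ rec) hx hy big_ord_recr /= subnn expr0 mul1r [(m + 2)%N]addn2 modnn hl.
rewrite big_add1 /= big_mkord big_ord_recr /= [in RHS]mulrDr [in RHS]big_distrr /=.
have e1 : κ * w ^+ m * (b m.+1 * (X / w) ^+ m) = X ^+ m * (κ * b m.+1).
  rewrite expr_div_n; field; by rewrite expf_neq0.
set S := \sum_(i < m) _ * X ^+ i * _.
have -> : \sum_(i < m) κ * w ^+ m * (b i.+1 * (X / w) ^+ i) = S.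
  apply: eq_bigr => i _.
  have hi := ltn_ord i.
  rewrite modn_small ?he //; last by lia.
  have -> : w ^+ m = w ^+ (m - i) * w ^+ i by rewrite -exprD subnK //; lia.
  rewrite expr_div_n; field; by rewrite expf_neq0.
rewrite e1 exprS; ring.
Qed.

Lemma linrecSS a0 a1 c1 c2 m :
  linrec a0 a1 c1 c2 m.+2 = (c1 * linrec a0 a1 c1 c2 m.+1 + c2 * linrec a0 a1 c1 c2 m)%N.
Proof. by []. Qed.

Lemma LSS a0 a1 c1 c2 k :
  (linrec a0 a1 c1 c2 k.+2)%:R = c1%:R * (linrec a0 a1 c1 c2 k.+1)%:R
     + c2%:R * (linrec a0 a1 c1 c2 k)%:R :> rat.
Proof. by rewrite linrecSS natrD !natrM. Qed.

Lemma lin0 a0 a1 c1 c2 : linrec a0 a1 c1 c2 0 = a0. Proof. by []. Qed.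
Lemma lin1 a0 a1 c1 c2 : linrec a0 a1 c1 c2 1 = a1. Proof. by []. Qed.

Lemma linrec_ge a0 a1 c1 c2 k m : (0 < c1)%N -> (k <= m)%N ->
  (linrec a0 a1 c1 c2 k.+1 <= linrec a0 a1 c1 c2 m.+1)%N.
Proof.
move=> hc; elim: m => [|m IH] hk.
  by have -> : k = 0%N by lia.
case: (ltngtP k m.+1) => h; last by rewrite h.
  apply: leq_trans (IH _) _; first lia.
  rewrite linrecSS; nia.
lia.
Qed.

Theorem mainTheorem4 (n g : nat) (hn : (2 <= n)%N) (hg : coprime n g) :
  [/\
   (* (i) Fibonacci *)
   \det (gcirc n g (fun k => (Fib k.+1)%:R : rat)) =
     \det (Qg rat n g) *
     ((1 - (Fib n.+1)%:R) ^+ n.-1 +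
      (Fib n)%:R ^+ (n - 2) *
        \sum_(1 <= i < n) (Fib i)%:R * ((1 - (Fib n.+1)%:R) / (Fib n)%:R) ^+ i.-1),
   (* (ii) Lucas *)
   \det (gcirc n g (fun k => (Luc k.+1)%:R : rat)) =
     \det (Qg rat n g) *
     ((1 - (Luc n.+1)%:R) ^+ n.-1 +
      ((Luc n)%:R - 2) ^+ (n - 2) *
        \sum_(1 <= i < n) ((Luc i.+2)%:R - 3 * (Luc i.+1)%:R) *
          ((1 - (Luc n.+1)%:R) / ((Luc n)%:R - 2)) ^+ i.-1),
   (* (iii) Pell *)
   \det (gcirc n g (fun k => (Pell k.+1)%:R : rat)) =
     \det (Qg rat n g) *
     ((1 - (Pell n.+1)%:R) ^+ n.-1 +
      (Pell n)%:R ^+ (n - 2) *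
        \sum_(1 <= i < n) (Pell i)%:R * ((1 - (Pell n.+1)%:R) / (Pell n)%:R) ^+ i.-1)
   &
   (* (iv) Jacobsthal *)
   \det (gcirc n g (fun k => (Jac k.+1)%:R : rat)) =
     \det (Qg rat n g) *
     ((1 - (Jac n.+1)%:R) ^+ n.-1 +
      2 ^+ n.-1 * (Jac n)%:R ^+ (n - 2) *
        \sum_(1 <= i < n) (Jac i)%:R * ((1 - (Jac n.+1)%:R) / (2 * (Jac n)%:R)) ^+ i.-1)].
Proof.
case: n hn hg => [|[|m]] // _ _.
have subm : (m.+2 - 2 = m)%N by lia.
rewrite subm /=.
split.
- rewrite gcirc_mul // det_mulmx.
  rewrite (@circ_final _ m _ (fun i => (Fib i)%:R) 1%:R 1%:R
            (1 - (Fib m.+3)%:R) (Fib m.+2)%:R 1).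
  + by rewrite mul1r.
  + by move=> k; rewrite /Fib LSS.
  + rewrite /Fib !LSS ?lin0 ?lin1 /=; ring.
  + rewrite /Fib !LSS ?lin0 ?lin1 /=; ring.
  + rewrite pnatr_eq0 -lt0n.
    exact: (leq_trans _ (linrec_ge 0 1 1 1 0 m.+1 _ _)).
  + move=> i _; rewrite addn2 /Fib !LSS ?lin0 ?lin1 /=; ring.
  + rewrite /Fib !LSS ?lin0 ?lin1 /=; ring.
- rewrite gcirc_mul // det_mulmx.
  rewrite (@circ_final _ m _ (fun i => (Luc i.+2)%:R - 3 * (Luc i.+1)%:R) 1%:R 1%:R
            (1 - (Luc m.+3)%:R) ((Luc m.+2)%:R - 2) 1).
  + by rewrite mul1r.
  + by move=> k; rewrite /Luc LSS.
  + rewrite /Luc !LSS ?lin0 ?lin1 /=; ring.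
  + rewrite /Luc !LSS ?lin0 ?lin1 /=; ring.
  + rewrite subr_eq0 eqr_nat.
    have := linrec_ge 2 1 1 1 1 m.+1 isT isT.
    rewrite /Luc; have -> : linrec 2 1 1 1 2 = 3%N by [].
    lia.
  + move=> i _; rewrite addn2 /Luc !LSS ?lin0 ?lin1 /=; ring.
  + rewrite /Luc !LSS ?lin0 ?lin1 /=; ring.
- rewrite gcirc_mul // det_mulmx.
  rewrite (@circ_final _ m _ (fun i => (Pell i)%:R) 2%:R 1%:R
            (1 - (Pell m.+3)%:R) (Pell m.+2)%:R 1).
  + by rewrite mul1r.
  + by move=> k; rewrite /Pell LSS.
  + rewrite /Pell !LSS ?lin0 ?lin1 /=; ring.
  + rewrite /Pell !LSS ?lin0 ?lin1 /=; ring.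
  + rewrite pnatr_eq0 -lt0n.
    exact: (leq_trans _ (linrec_ge 0 1 2 1 0 m.+1 _ _)).
  + move=> i _; rewrite addn2 /Pell !LSS ?lin0 ?lin1 /=; ring.
  + rewrite /Pell !LSS ?lin0 ?lin1 /=; ring.
- rewrite gcirc_mul // det_mulmx.
  rewrite (@circ_final _ m _ (fun i => (Jac i)%:R) 1%:R 2%:R
            (1 - (Jac m.+3)%:R) (2 * (Jac m.+2)%:R) 2).
  + by rewrite [2 ^+ m.+1]exprS exprMn mulrA.
  + by move=> k; rewrite /Jac LSS.
  + rewrite /Jac !LSS ?lin0 ?lin1 /=; ring.
  + rewrite /Jac !LSS ?lin0 ?lin1 /=; ring.
  + rewrite mulf_neq0 // pnatr_eq0 -lt0n.
    exact: (leq_trans _ (linrec_ge 0 1 1 2 0 m.+1 _ _)).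
  + move=> i _; rewrite addn2 /Jac !LSS ?lin0 ?lin1 /=; ring.
  + rewrite /Jac !LSS ?lin0 ?lin1 /=; ring.
Qed.
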